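(* Let $R$ be an associative ring with identity and $a,b,c,d\in R$ such that both $a^{\|(b,c)}$ and $d^{\|(b,c)}$ exist. Then the following are equivalent: (i) $ad$ has a $(b,c)$-inverse and $(ad)^{\|(b,c)}=d^{\|(b,c)}a^{\|(b,c)}$; (ii) $d^{\|(b,c)}=d^{\|(b,c)}add^{\|(b,c)}a^{\|(b,c)}=d^{\|(b,c)}a^{\|(b,c)}add^{\|(b,c)}$; (iii) $a^{\|(b,c)}=a^{\|(b,c)}add^{\|(b,c)}a^{\|(b,c)}=d^{\|(b,c)}a^{\|(b,c)}ada^{\|(b,c)}$.
   Context: For $a,b,c\in R$, $a$ is $(b,c)$-invertible if there exists $y\in R$ with $y\in (bRy)\cap(yRc)$, $yab=b$ and $cay=c$; such $y$ is unique and denoted $a^{\|(b,c)}$. *)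

(* Defs.v *)
From HB Require Import structures.
From mathcomp Require Import all_boot all_order all_algebra.
Set Implicit Arguments. Unset Strict Implicit. Unset Printing Implicit Defensive.
Import GRing.Theory.
Local Open Scope ring_scope.

Definition bc_inverse (R : pzRingType) (a b c y : R) : Prop :=
  (exists r : R, y = b * r * y) /\ (exists s : R, y = y * s * c) /\
  y * a * b = b /\ c * a * y = c.

(* Main.v *)
Require Import Defs.
From HB Require Import structures.
From mathcomp Require Import all_boot all_order all_algebra.
Import GRing.Theory.
Local Open Scope ring_scope.

Lemma bc_uniq {R : pzRingType} {a b c y y' : R} :
  bc_inverse a b c y -> bc_inverse a b c y' -> y = y'.
Proof.
move=> [[r Er] [[s Es] [Hb Hc]]] [[r' Er'] [[s' Es'] [Hb' Hc']]].
have e1 : y' = y * a * y'.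
  rewrite {1}Er' -{1}Hb -!mulrA; congr (_ * (_ * _)).
  by rewrite mulrA -Er'.
have e2 : y = y * a * y'.
  rewrite {1}Es -{1}Hc' !mulrA; congr (_ * _ * _).
  by rewrite -Es.
by rewrite e1 -e2.
Qed.

Theorem theorem4p4 (R : pzRingType) (a b c d y z : R)
  (Hy : bc_inverse a b c y) (Hz : bc_inverse d b c z) :
  let i := (exists w, bc_inverse (a * d) b c w) /\
           (forall w, bc_inverse (a * d) b c w -> w = z * y) in
  let ii := z = z * a * d * z * y /\ z * a * d * z * y = z * y * a * d * z in
  let iii := y = y * a * d * z * y /\ y * a * d * z * y = z * y * a * d * y in
  (i <-> ii) /\ (i <-> iii).
Proof.
move: (Hy) (Hz) => [[ry Ery] [[sy Esy] [Hyb Hyc]]] [[rz Erz] [[sz Esz] [Hzb Hzc]]].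
set P := z * y * a * d * b = b /\ c * a * d * z * y = c.
have PB : P -> bc_inverse (a * d) b c (z * y).
  move=> [P1 P2]; split; [|split; [|split]].
  - exists rz; by rewrite !mulrA -Erz.
  - exists sy; by rewrite -[z * y * sy]mulrA -mulrA -Esy.
  - by rewrite !mulrA.
  - by rewrite !mulrA.
have BP : bc_inverse (a * d) b c (z * y) -> P.
  move=> [_ [_ [H1 H2]]]; rewrite !mulrA in H1 H2; by split.
have iP : forall i : Prop, i = ((exists w, bc_inverse (a * d) b c w) /\
           (forall w, bc_inverse (a * d) b c w -> w = z * y)) -> (i <-> P).
  move=> i ->; split.
  - move=> [[w Hw] H]; apply: BP; by rewrite -(H w Hw).
  - move=> HP; split; first by exists (z * y); apply: PB.
    move=> w Hw; exact: (bc_uniq Hw (PB HP)).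
move=> i ii iii.
have iiP : ii <-> P.
  rewrite /ii; split.
  - move=> [E1 E2]; split.
    + rewrite -{2}Hzb {2}E1 E2.
      by rewrite -[z * y * a * d * z * d]mulrA -[_ * (z * d) * b]mulrA Hzb.
    + by rewrite -{2}Hzc {2}E1 !mulrA Hzc.
  - move=> [P1 P2].
    have A : z = z * a * d * z * y.
      by rewrite {1}Esz -{1}P2 !mulrA -Esz.
    have B : z * y * a * d * z = z.
      by rewrite {2}Erz !mulrA P1 -Erz.
    by split; rewrite -?A ?B.
have iiiP : iii <-> P.
  rewrite /iii; split.
  - move=> [E1 E2]; split.
    + rewrite -{2}Hyb {2}E1 E2.
      by rewrite -[z * y * a * d * y * a]mulrA -[_ * (y * a) * b]mulrA Hyb.
    + by rewrite -{2}Hyc {2}E1 !mulrA Hyc.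
  - move=> [P1 P2].
    have A : y = y * a * d * z * y.
      by rewrite {1}Esy -{1}P2 !mulrA -Esy.
    have B : z * y * a * d * y = y.
      by rewrite {2}Ery !mulrA P1 -Ery.
    by split; rewrite -?A ?B.
have HI := iP i erefl.
split; [move: HI iiP | move: HI iiiP]; tauto.
Qed.
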